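(* Let $n\ge 2$, let $\sigma,\tau$ be positive integers with $|\sigma-\tau|\le1$ and $d=\sigma+\tau$, and let $\mathcal{S}$ be the set of all $\mathbf{T}=(T_{p-q})_{p,q=0}^{n-1}\in\mathcal{T}_{n,d}(\mathcal{O}_{\sigma,\tau})$ such that $T_j$ is noninvertible for every $j\neq0$. Then there are no $A,B\in\mathcal{O}_{\sigma,\tau}$ with $\operatorname{Ker}A\cap\operatorname{Ker}B=\{0\}$ such that $\mathcal{S}=\mathcal{F}_{A,B}^{\mathcal{O}_{\sigma,\tau}}$.
   Context: For $\sigma,\tau$ positive integers with $\sigma+\tau=d$, the Schur algebra is $$\mathcal{O}_{\sigma,\tau}=\left\{\begin{pmatrix}\lambda I_\sigma & X\\ 0 & \lambda I_\tau\end{pmatrix} : \lambda\in\mathbb{C},\ X\in\mathcal{M}_{\sigma\times\tau}(\mathbb{C})\right\}\subseteq\mathcal{M}_{d\times d}(\mathbb{C}),$$ written with respect to $\mathbb{C}^d=\mathbb{C}^\sigma\oplus\mathbb{C}^\tau$. For positive integers $n,d$, $\mathcal{T}_{n,d}$ denotes the set of block Toeplitz matrices $\mathbf{T}=(T_{p-q})_{p,q=0}^{n-1}$: $nd\times nd$ complex matrices partitioned into $n\times n$ blocks of size $d\times d$, whose $(p,q)$ block is $T_{p-q}$ for some $T_{-(n-1)},\dots,T_{n-1}\in\mathcal{M}_{d\times d}(\mathbb{C})$. For a subalgebra $\mathcal{B}\subseteq\mathcal{M}_{d\times d}(\mathbb{C})$, $\mathcal{T}_{n,d}(\mathcal{B})$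 is the set of $\mathbf{T}\in\mathcal{T}_{n,d}$ with all $T_j\in\mathcal{B}$. For $A,B\in\mathcal{M}_{d\times d}(\mathbb{C})$, $$\mathcal{F}_{A,B}^{\mathcal{B}}=\{(T_{p-q})_{p,q=0}^{n-1}\in\mathcal{T}_{n,d}(\mathcal{B}) : AT_j=BT_{j-n}\text{ for } j=1,2,\dots,n-1\}.$$ *)

(* Defs.v *)
From HB Require Import structures.
From mathcomp Require Import all_boot all_order all_algebra.
Set Implicit Arguments. Unset Strict Implicit. Unset Printing Implicit Defensive.
Import Order.TTheory GRing.Theory Num.Theory.
Local Open Scope ring_scope.

(* Block index: the entry (i,j) of block (p,q) of an (n*d)x(n*d) matrix sits
   at row p*d+i, column q*d+j. *)
Lemma blk_index_proof (n d : nat) (p : 'I_n) (i : 'I_d) : (p * d + i < n * d)%N.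
Proof.
have Hp : (p.+1 <= n)%N := ltn_ord p.
apply: (@leq_trans (p * d + d)%N); first by rewrite ltn_add2l ltn_ord.
by rewrite addnC -mulSn leq_mul2r Hp orbT.
Qed.

Definition blk_index (n d : nat) (p : 'I_n) (i : 'I_d) : 'I_(n * d) :=
  Ordinal (blk_index_proof p i).

Definition schur_alg (C : fieldType) (s t : nat) (M : 'M[C]_(s + t)) : Prop :=
  exists (lam : C) (X : 'M[C]_(s, t)),
    M = block_mx (lam%:M) X 0 (lam%:M).

Definition is_block_toeplitz (C : fieldType) (n d : nat)
    (M : 'M[C]_(n * d)) (T : int -> 'M[C]_d) : Prop :=
  forall (p q : 'I_n) (i j : 'I_d),
    M (blk_index p i) (blk_index q j) = T (p%:Z - q%:Z) i j.

Definition toeplitz_in (C : fieldType) (n d : nat) (B : 'M[C]_d -> Prop)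
    (M : 'M[C]_(n * d)) (T : int -> 'M[C]_d) : Prop :=
  is_block_toeplitz M T /\
  forall j : int, - (n.-1)%:Z <= j <= (n.-1)%:Z -> B (T j).

Definition F_AB (C : fieldType) (n d : nat) (B : 'M[C]_d -> Prop)
    (A Bm : 'M[C]_d) (M : 'M[C]_(n * d)) : Prop :=
  exists T : int -> 'M[C]_d,
    toeplitz_in B M T /\
    forall j : nat, (1 <= j <= n.-1)%N ->
      A *m T j%:Z = Bm *m T (j%:Z - n%:Z).

Definition S_set (C : fieldType) (n d : nat) (B : 'M[C]_d -> Prop)
    (M : 'M[C]_(n * d)) : Prop :=
  exists T : int -> 'M[C]_d,
    toeplitz_in B M T /\
    forall j : int, - (n.-1)%:Z <= j <= (n.-1)%:Z -> j != 0 ->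
      T j \notin unitmx.

(* Main.v *)
Require Import Defs.
From HB Require Import structures.
From mathcomp Require Import all_boot all_order all_algebra.
From mathcomp Require Import zify.
Import Order.TTheory GRing.Theory Num.Theory.
Local Open Scope ring_scope.

Section Aux.
Variables (C : numClosedFieldType) (s t : nat).
Hypotheses (hs : (0 < s)%N) (ht : (0 < t)%N).

Definition Nmat : 'M[C]_(s + t) :=
  block_mx 0 (const_mx 1 : 'M[C]_(s, t)) 0 0.
Definition v0 : 'cV[C]_(s + t) := col_mx (const_mx 1 : 'M[C]_(s, 1)) 0.

Lemma Nv0 : Nmat *m v0 = 0.
Proof. by rewrite /Nmat /v0 mul_block_col !mul0mx !mulmx0 !addr0 col_mx0. Qed.

Lemma v0_neq0 : v0 != 0.
Proof.
apply/eqP => /matrixP /(_ (lshift t (Ordinal hs)) ord0).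
by rewrite col_mxEu !mxE => /eqP; rewrite oner_eq0.
Qed.

Lemma nonunit_of_ker (M : 'M[C]_(s + t)) : M *m v0 = 0 -> M \notin unitmx.
Proof.
move=> H; apply/negP => U.
have := mulKmx U v0; rewrite H mulmx0 => /esym/eqP.
by rewrite (negbTE v0_neq0).
Qed.

Lemma scal0 k : (0 : C)%:M = 0 :> 'M[C]_k.
Proof. by apply/matrixP => i j; rewrite !mxE mul0rn. Qed.

Lemma schur_N : schur_alg Nmat.
Proof. by exists 0, (const_mx 1); rewrite /Nmat !scal0. Qed.

Lemma schur_0 : schur_alg (0 : 'M[C]_(s + t)).
Proof. by exists 0, 0; rewrite !scal0 block_mx0. Qed.

Lemma schur_ker (A : 'M[C]_(s + t)) :
  schur_alg A -> A *m Nmat = 0 -> A *m v0 = 0.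
Proof.
move=> [a [Y ->]]; rewrite /Nmat mulmx_block -block_mx0.
move=> /eq_block_mx [_ H _ _].
move: H; rewrite !mulmx0 addr0 mul_scalar_mx => /matrixP
  /(_ (Ordinal hs) (Ordinal ht)); rewrite !mxE mulr1 => ->.
by rewrite /v0 mul_block_col mul_scalar_mx !scale0r !mulmx0 !mul0mx !addr0 col_mx0.
Qed.
End Aux.

Section Toep.
Variables (C : fieldType) (n d : nat).
Hypotheses (hd : (0 < d)%N).

Definition Mof (T : int -> 'M[C]_d) : 'M[C]_(n * d) :=
  \matrix_(r, c) T ((r %/ d)%N%:Z - (c %/ d)%N%:Z)
     (Ordinal (ltn_pmod r hd)) (Ordinal (ltn_pmod c hd)).

Lemma divblk (p : 'I_n) (i : 'I_d) : ((p * d + i) %/ d)%N = p.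
Proof. by rewrite divnMDl // divn_small // addn0. Qed.

Lemma modblk (p : 'I_n) (i : 'I_d) : ((p * d + i) %% d)%N = i.
Proof. by rewrite modnMDl modn_small. Qed.

Lemma Mof_toep T : is_block_toeplitz (Mof T) T.
Proof.
move=> p q i j; rewrite mxE /= !divblk.
congr (T _ _ _); apply: val_inj => /=; exact: modblk.
Qed.

Lemma toep_uniq (n0 : (0 < n)%N) (M : 'M[C]_(n * d)) T T' (j : int) :
  is_block_toeplitz M T -> is_block_toeplitz M T' ->
  - (n.-1)%:Z <= j <= (n.-1)%:Z -> T j = T' j.
Proof.
move=> H H' hj.
have [p [q Hpq]] : exists p q : 'I_n, p%:Z - q%:Z = j.
  case: j hj => k hk.
    have kn : (k < n)%N by lia.
    by exists (Ordinal kn), (Ordinal n0) => /=; lia.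
  have kn : (k.+1 < n)%N by lia.
  by exists (Ordinal n0), (Ordinal kn) => /=; lia.
apply/matrixP => i k; by rewrite -Hpq -H -H'.
Qed.
End Toep.

Theorem mainTheorem11 (C : numClosedFieldType) (n s t : nat)
  (hn : (2 <= n)%N) (hs : (0 < s)%N) (ht : (0 < t)%N)
  (hst : (s <= t.+1)%N && (t <= s.+1)%N) :
  ~ exists A B : 'M[C]_(s + t),
      [/\ schur_alg A, schur_alg B,
          (forall v : 'cV[C]_(s + t), A *m v = 0 -> B *m v = 0 -> v = 0)
        & forall M : 'M[C]_(n * (s + t)),
            S_set (@schur_alg C s t) M <-> F_AB (@schur_alg C s t) A B M].
Proof.
move=> [A [B [sA sB Hker HSF]]].
have hd : (0 < s + t)%N by lia.
have n0 : (0 < n)%N by lia.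
have key : forall T : int -> 'M[C]_(s + t),
    (forall j, T j = 0 \/ T j = Nmat C s t) ->
    forall j : nat, (1 <= j <= n.-1)%N -> A *m T j%:Z = B *m T (j%:Z - n%:Z).
  move=> T HT.
  have HS : S_set (@schur_alg C s t) (@Mof C n _ hd T).
    exists T; split; first split.
    - exact: Mof_toep.
    - move=> j _; case: (HT j) => ->; [exact: schur_0 | exact: schur_N].
    - move=> j _ _; apply: (@nonunit_of_ker C s t hs).
      by case: (HT j) => ->; [rewrite mul0mx | exact: (@Nv0 C s t)].
  case: ((HSF _).1 HS) => T' [[HT' _] Hrel] j hj.
  rewrite (@toep_uniq C n _ hd n0 _ _ _ _ (@Mof_toep C n _ hd T) HT'); last by lia.
  rewrite (@toep_uniq C n _ hd n0 _ _ _ _ (@Mof_toep C n _ hd T) HT'); last by lia.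
  exact: Hrel.
have HA := key (fun j => if j == 1 then Nmat C s t else 0).
have HB := key (fun j => if j == -1 then Nmat C s t else 0).
have hA : A *m Nmat C s t = 0.
  have := HA _ 1%N; rewrite eqxx.
  have -> : ((1%N%:Z - n%:Z) == 1) = false by apply/eqP; lia.
  rewrite mulmx0; apply; first by move=> j; case: ifP; auto.
  lia.
have hB : B *m Nmat C s t = 0.
  have := HB _ n.-1.
  have -> : ((n.-1)%:Z == -1) = false by apply/eqP; lia.
  have -> : ((n.-1)%:Z - n%:Z == -1) = true by apply/eqP; lia.
  rewrite mulmx0 => H; rewrite -H //; first by move=> j; case: ifP; auto.
  lia.
have := Hker _ (@schur_ker C s t hs ht _ sA hA) (@schur_ker C s t hs ht _ sB hB).
by move/eqP; rewrite (negbTE (@v0_neq0 C s t hs)).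
Qed.
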